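(* Let $d\ge 1$ and let $Q=\bigcap_{i=1}^{k}\{x\in\mathbb{R}^d:\langle u_i,x\rangle\le b_i\}$ be a convex polytope whose facets have the $k$ pairwise distinct outward unit normals $u_1,\dots,u_k$. Let $P\subset\mathbb{R}^d$ be a finite set of $n\ge 1$ points. Then there exists $p\in P$ such that $p\in M$ for every homothet $M$ of $Q$ with $|M\cap P|>(1-\frac{1}{k})n$.
   Context: A homothet of $Q$ is a set of the form $\lambda Q+t=\{\lambda x+t: x\in Q\}$ with $\lambda>0$ and $t\in\mathbb{R}^d$. *)

(* Defs.v *)
(* points of R^d are row vectors 'rV[R]_d over an arbitrary
   real field R (the statement is purely order-algebraic). *)
From HB Require Import structures.
From mathcomp Require Import all_boot all_order all_algebra.
Set Implicit Arguments. Unset Strict Implicit. Unset Printing Implicit Defensive.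
Import Order.TTheory GRing.Theory Num.Theory.
Local Open Scope ring_scope.

Definition dotp (R : realFieldType) (d : nat) (u x : 'rV[R]_d) : R :=
  \sum_(j < d) u 0 j * x 0 j.

Definition inQ (R : realFieldType) (d k : nat) (u : 'I_k -> 'rV[R]_d)
  (b : 'I_k -> R) (x : 'rV[R]_d) : Prop :=
  forall i : 'I_k, dotp (u i) x <= b i.

Definition bounded_set (R : realFieldType) (d : nat) (S : 'rV[R]_d -> Prop) : Prop :=
  exists C : R, forall x, S x -> forall j : 'I_d, `|x 0 j| <= C.

(* F is a facet-dimensional set in R^d: it contains d affinely independent
   points x0, x0 + X_1, ..., x0 + X_{d-1} (rows of X linearly independent),
   i.e. its affine hull has dimension >= d-1. *)
Definition has_dim_ge_pred (R : realFieldType) (d : nat) (F : 'rV[R]_d -> Prop) : Prop :=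
  exists (x0 : 'rV[R]_d) (X : 'M[R]_(d.-1, d)),
    F x0 /\ (forall j : 'I_d.-1, F (row j X + x0)) /\ row_free X.

(* the i-th constraint of Q defines a facet of Q:
   F_i = Q ∩ {<u_i,x> = b_i} has affine dimension d-1
   (it lies in a hyperplane since u_i <> 0, so dimension is at most d-1). *)
Definition is_facet_constraint (R : realFieldType) (d k : nat)
  (u : 'I_k -> 'rV[R]_d) (b : 'I_k -> R) (i : 'I_k) : Prop :=
  has_dim_ge_pred (fun x => inQ u b x /\ dotp (u i) x = b i).

Definition in_homothet (R : realFieldType) (d : nat) (Q : 'rV[R]_d -> Prop)
  (lam : R) (t : 'rV[R]_d) (x : 'rV[R]_d) : Prop :=
  exists2 y, Q y & x = lam *: y + t.

(* |M ∩ P| > m, for P given as a duplicate-free list: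
   some sub-list of P of size > m lies in M *)
Definition card_inter_gt (R : realFieldType) (d : nat) (M : 'rV[R]_d -> Prop)
  (P : seq 'rV[R]_d) (m : R) : Prop :=
  exists S : seq 'rV[R]_d, subseq S P /\ (forall x, x \in S -> M x) /\ m < (size S)%:R.

(* Main.v *)
Require Import Defs.
From HB Require Import structures.
From mathcomp Require Import all_boot all_order all_algebra.
From mathcomp Require Import ring lra.
Import Order.TTheory GRing.Theory Num.Theory.
Local Open Scope ring_scope.

Lemma dotp_lin (R : realFieldType) (d : nat) (v y t : 'rV[R]_d) (a : R) :
  dotp v (a *: y + t) = a * dotp v y + dotp v t.
Proof.
rewrite /dotp mulr_sumr -big_split; apply: eq_bigr => j _; by rewrite !mxE mulrDr mulrCA.
Qed.

Lemma dotpZ (R : realFieldType) (d : nat) (v y : 'rV[R]_d) (a : R) :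
  dotp v (a *: y) = a * dotp v y.
Proof. by rewrite /dotp mulr_sumr; apply: eq_bigr => j _; rewrite !mxE mulrCA. Qed.

Lemma dotpB (R : realFieldType) (d : nat) (v y t : 'rV[R]_d) :
  dotp v (y - t) = dotp v y - dotp v t.
Proof.
rewrite /dotp -sumrN -big_split; apply: eq_bigr => j _; by rewrite !mxE mulrDr mulrN.
Qed.

Lemma homothetP (R : realFieldType) (d k : nat) (u : 'I_k -> 'rV[R]_d)
  (b : 'I_k -> R) (lam : R) (t x : 'rV[R]_d) : 0 < lam ->
  in_homothet (inQ u b) lam t x <-> forall i, dotp (u i) x <= lam * b i + dotp (u i) t.
Proof.
move=> hl; split.
  case=> y hy -> i; rewrite dotp_lin lerD2r ler_pM2l //.
move=> H; exists (lam^-1 *: (x - t)).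
  move=> i; rewrite -(ler_pM2l hl) dotpZ dotpB mulrA divff ?lt0r_neq0 // mul1r.
  have := H i; lra.
by rewrite scalerA divff ?lt0r_neq0 // scale1r subrK.
Qed.

Lemma min_exists (R : realFieldType) (T : eqType) (f : T -> R) (B : pred T) (s : seq T) :
  has B s -> exists p, [/\ p \in s, B p & {in s, forall q, B q -> f p <= f q}].
Proof.
elim: s => //= x s IH /orP [Bx|hs].
  case hs: (has B s).
    have [p [ps Bp Hp]] := IH hs.
    case: (leP (f x) (f p)) => h.
      exists x; split => //; first by rewrite inE eqxx.
      move=> q; rewrite inE => /orP [/eqP -> //|qs Bq]; exact: le_trans h (Hp q qs Bq).
    exists p; split => //; first by rewrite inE ps orbT.
    move=> q; rewrite inE => /orP [/eqP -> _|qs Bq]; [exact: ltW | exact: Hp].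
  exists x; split => //; first by rewrite inE eqxx.
  move=> q; rewrite inE => /orP [/eqP -> //|qs Bq].
  by move/hasPn: hs => /(_ q qs); rewrite Bq.
have [p [ps Bp Hp]] := IH hs.
case Bx: (B x).
  case: (leP (f x) (f p)) => h.
    exists x; split => //; first by rewrite inE eqxx.
    move=> q; rewrite inE => /orP [/eqP -> //|qs Bq]; exact: le_trans h (Hp q qs Bq).
  exists p; split => //; first by rewrite inE ps orbT.
  move=> q; rewrite inE => /orP [/eqP -> _|qs Bq]; [exact: ltW | exact: Hp].
exists p; split => //; first by rewrite inE ps orbT.
by move=> q; rewrite inE => /orP [/eqP ->|qs Bq]; [rewrite Bx | exact: Hp].
Qed.

Lemma count_exists (T : Type) (k : nat) (B : 'I_k -> pred T) (s : seq T) :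
  (count (fun p => [exists i, B i p]) s <= \sum_(i < k) count (B i) s)%N.
Proof.
elim: s => [|x s IH] /=; first by rewrite big1.
rewrite big_split /= leq_add //.
case: existsP => [[i Bi]|] //.
by rewrite (bigD1 i) //= Bi.
Qed.

Lemma finlem (R : realFieldType) (x y w : R) : w <= x - y -> x - w < y -> False.
Proof. move=> h3 h5; lra. Qed.

Theorem corollary4 (R : realFieldType) (d k : nat) (hd : (1 <= d)%N)
  (u : 'I_k -> 'rV[R]_d) (b : 'I_k -> R)
  (hunit : forall i, dotp (u i) (u i) = 1)
  (hdist : injective u)
  (hbdd : bounded_set (inQ u b))
  (hfacet : forall i, is_facet_constraint u b i)
  (P : seq 'rV[R]_d) (n : nat) (huniq : uniq P) (hsize : size P = n) (hn : (1 <= n)%N) :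
  exists2 p, p \in P &
    forall (lam : R) (t : 'rV[R]_d), 0 < lam ->
      card_inter_gt (in_homothet (inQ u b) lam t) P ((1 - k%:R^-1) * n%:R) ->
      in_homothet (inQ u b) lam t p.
Proof.
pose c i (x : 'rV[R]_d) := dotp (u i) x.
pose bad i p := (k * count (fun q => (c i p <= c i q)%R) P < n)%N.
have hbad : forall i, (k * count (bad i) P < n)%N.
  move=> i; case hb: (has (bad i) P); last first.
    by rewrite has_count in hb; move: hb; case: count => //; rewrite muln0.
  have [p [pP Bp Hp]] := @min_exists _ _ (c i) _ _ hb.
  apply: leq_ltn_trans Bp; rewrite leq_mul2l; apply/orP; right.
  rewrite -(eq_in_count (a1 := predI (bad i) (fun q => c i p <= c i q))).
    by apply: sub_count => q /andP [].
  by move=> q qP /=; case Bq: (bad i q) => //=; rewrite Hp.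
have [p pP pgood] : exists2 p, p \in P & forall i, ~~ bad i p.
  have: (count (fun p => [exists i, bad i p]) P < n)%N.
    apply: leq_ltn_trans (@count_exists _ _ bad P) _.
    case: k u b hunit hdist hbdd hfacet c bad hbad => [|k'] u b _ _ _ _ c bad hbad.
      by rewrite big_ord0.
    rewrite -(ltn_pmul2l (isT : (0 < k'.+1)%N)) big_distrr /=.
    apply: (@leq_ltn_trans (\sum_(i < k'.+1) n.-1)).
      by apply: leq_sum => i _; rewrite -ltnS prednK //; exact: hbad.
    rewrite sum_nat_const card_ord -{2}(prednK hn) ltn_pmul2l // ltnSn.
  move=> hc; have /hasP [p pP /= hp]: has (predC (fun p => [exists i, bad i p])) P.
    rewrite has_count -(ltn_add2l (count (fun p => [exists i, bad i p]) P)) addn0.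
    by rewrite count_predC hsize.
  exists p => // i.
  by apply/negP => bi; move/negP: hp; apply; apply/existsP; exists i.
exists p => // lam t hl [S [sS [SM hS]]].
apply/(@homothetP _ _ _ u b lam t p hl) => i.
rewrite leNgt; apply/negP => hi.
have kpos : (0 < k)%N := leq_ltn_trans (leq0n i) (ltn_ord i).
set C := lam * b i + dotp (u i) t in hi.
have h1 : (count (fun q => (c i p <= c i q)%R) P <= n - size S)%N.
  have e1 : (size S <= count (fun q => (c i q <= C)%R) P)%N.
    rewrite -(count_predT S) -(eq_in_count (a1 := fun q => c i q <= C)).
      exact: leq_count_subseq.
    by move=> q qS; have := (@homothetP _ _ _ u b lam t q hl).1 (SM q qS) i; rewrite /c => ->.
  rewrite leq_subRL; last by rewrite -hsize size_subseq.
  apply: leq_trans (leq_add e1 (leqnn _)) _.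
  rewrite addnC -count_predUI.
  have -> : count (predI (fun q => c i p <= c i q) (fun q => c i q <= C)) P = 0%N.
    apply/eqP; rewrite eqn0Ngt -has_count; apply/hasPn => q _ /=; apply/negP => /andP [h h'].
    by move: (le_lt_trans (le_trans h h') hi); rewrite ltxx.
  by rewrite addn0 -hsize count_size.
have sn : (size S <= n)%N by rewrite -hsize size_subseq.
have h2 : (n <= k * (n - size S))%N.
  by apply: leq_trans (leq_mul (leqnn k) h1); rewrite leqNgt; exact: (pgood i).
have h3 : n%:R <= k%:R * (n%:R - (size S)%:R) :> R.
  by rewrite -natrB // -natrM ler_nat.
have kR : 0 < k%:R :> R by rewrite ltr0n.
have h4 : k%:R * ((1 - k%:R^-1) * n%:R) = k%:R * n%:R - n%:R :> R.
  by rewrite mulrA mulrBr mulr1 divff ?lt0r_neq0 // mulrBl mul1r.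
have h5 := hS; rewrite -(ltr_pM2l kR) h4 in h5.
rewrite mulrBr in h3.
by case: (finlem _ _ _ _ h3 h5).
Qed.
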